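(* If $f:\{0,1\}^n\to\{0,1\}$ is a monotone Boolean function, then $\max\{\mathsf N(f)^2,\mathsf N(\overline f)^2\}\ge\Omega(s(f))$.
   Context: $\mathsf N(f)$ is the minimum degree of a real polynomial $p$ with $|p(x)|\le1/3$ whenever $f(x)=0$ and $|p(x)|\ge1$ whenever $f(x)=1$; $\overline f=1-f$. $f$ is monotone if it is monotonically increasing or decreasing in the coordinatewise order. $s(f)$ is the sensitivity of $f$: the maximum over $x$ of the number of $i\in[n]$ with $f(x)\neq f(x^{\{i\}})$, where $x^{\{i\}}$ is $x$ with bit $i$ flipped. Constants are absolute. *)

(* Defs.v *)
From HB Require Import structures.
From mathcomp Require Import all_boot all_order all_algebra.
From mathcomp Require Import reals.
From mathcomp Require Import mpoly.
Set Implicit Arguments. Unset Strict Implicit. Unset Printing Implicit Defensive.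
Import Order.TTheory GRing.Theory Num.Theory.
Local Open Scope ring_scope.

Definition cube (n : nat) := {ffun 'I_n -> bool}.

Definition fneg (n : nat) (f : cube n -> bool) : cube n -> bool := fun x => ~~ f x.

Definition flip (n : nat) (x : cube n) (i : 'I_n) : cube n :=
  [ffun j => if j == i then ~~ x j else x j].

Definition sens (n : nat) (f : cube n -> bool) : nat :=
  \max_(x : cube n) #|[set i : 'I_n | f x != f (flip x i)]|.

Definition cube_le (n : nat) (x y : cube n) : bool := [forall i, x i ==> y i].

Definition monotone (n : nat) (f : cube n -> bool) : Prop :=
  (forall x y, cube_le x y -> f x <= f y)%N \/
  (forall x y, cube_le x y -> f y <= f x)%N.

(* total degree of a multivariate polynomial (msize p = 1 + degree, 0 for p = 0) *)
Definition mdegree (R : nzRingType) (n : nat) (p : {mpoly R[n]}) : nat := (msize p).-1.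

Definition embed (R : nzRingType) (n : nat) (x : cube n) : 'I_n -> R := fun i => (x i)%:R.

Definition nrep (R : realType) (n : nat) (f : cube n -> bool) (p : {mpoly R[n]}) : Prop :=
  forall x : cube n,
    if f x then 1 <= `|p.@[embed R x]| else `|p.@[embed R x]| <= 3^-1.

Definition is_N (R : realType) (n : nat) (f : cube n -> bool) (d : nat) : Prop :=
  (exists p : {mpoly R[n]}, nrep f p /\ mdegree p = d) /\
  (forall p : {mpoly R[n]}, nrep f p -> (d <= mdegree p)%N).

(* Main.v *)
Require Import Defs.
From HB Require Import structures.
From mathcomp Require Import all_boot all_order all_algebra.
From mathcomp Require Import reals.
From mathcomp Require Import mpoly.
From mathcomp Require Import zify ring lra.
Import Order.TTheory GRing.Theory Num.Theory.
Set Implicit Arguments. Unset Strict Implicit. Unset Printing Implicit Defensive.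

Lemma N1 m : (m.+1 * \prod_(1 <= j < m.+1) (4 * j^2) <= (2 * m).+1 * \prod_(1<=j<m.+1) (4 * j^2 - 1))%N.
Proof.
elim: m => [|m IH]; first by rewrite !big_geq.
rewrite big_nat_recr //= [X in (_ <= _ * X)%N]big_nat_recr //=.
set A := \prod_(1 <= j < m.+1) (4 * j^2).
set B := \prod_(1 <= j < m.+1) (4 * j^2 - 1).
move: IH; rewrite -/A -/B => IH.
have e : (4 * m.+1^2 - 1 = (2 * m).+1 * (2 * m+3))%N by nia.
rewrite e.
have h1 : (m.+2 * (A * (4 * m.+1 ^ 2)) = (m.+1 * A) * (4 * m.+1 * m.+2))%N by nia.
rewrite h1.
apply: (@leq_trans (((2 * m).+1 * B) * (4 * m.+1 * m.+2))%N).
  by rewrite leq_mul2r IH orbT.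
have h2 : ((2 * m.+1).+1 * (B * ((2 * m).+1 * (2 * m + 3))) = ((2 * m).+1 * B) * ((2 * m+3)*(2 * m+3)))%N by nia.
rewrite h2 leq_mul2l; apply/orP; right; nia.
Qed.

Definition dst (u v : nat) := (u - v + (v - u))%N.

Lemma N3 i m : (i <= m)%N -> (m`! * m`! <= (m-i)`! * (m+i)`!)%N.
Proof.
elim: i => [|i IH] lim; first by rewrite subn0 addn0.
apply: (leq_trans (IH (ltnW lim))).
have e1 : (m - i = (m - i.+1).+1)%N by lia.
rewrite e1 factS addnS factS.
have h : ((m - i.+1).+1 * (m - i.+1)`! * (m + i)`! = (m - i.+1)`! * (m + i)`! * (m - i.+1).+1)%N by lia.
have h' : ((m - i.+1)`! * ((m + i).+1 * (m + i)`!) = (m - i.+1)`! * (m + i)`! * (m + i).+1)%N by lia.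
rewrite h h' leq_mul2l; apply/orP; right; lia.
Qed.

Lemma Bk i k : (k < i)%N ->
  ((i-k-1)`! * i`! * \prod_(1<=j<k.+1) ((i-j)*(i+j)) = (i-1)`! * (i+k)`!)%N.
Proof.
elim: k => [|k IH] lt; first by rewrite big_geq // subn0 addn0 muln1 subn1 mulnC.
rewrite big_nat_recr //=.
have := IH (ltnW lt).
have e1 : (i - k - 1 = (i - k.+1 - 1).+1)%N by lia.
rewrite e1 factS => H.
rewrite addnS factS.
have h : ((i - k.+1 - 1)`! * i`! * (\prod_(1 <= i0 < k.+1) ((i - i0) * (i + i0)) * ((i - k.+1) * (i + k).+1))
   = ((i - k.+1 - 1).+1 * (i - k.+1 - 1)`! * i`! * \prod_(1 <= i0 < k.+1) ((i - i0) * (i + i0))) * (i + k).+1)%N.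
  have e2 : (i - k.+1 = (i - k.+1 - 1).+1)%N by lia.
  rewrite e2; set a := (i - k.+1 - 1)%N; set P := \prod_(_ <= _ < _) _; nia.
by rewrite h H; lia.
Qed.

Lemma N2 i m : (1 <= i <= m)%N ->
  (2 * i^2 * \prod_(1<=j<m.+1 | j != i) dst (i^2) (j^2) = (m-i)`! * (m+i)`!)%N.
Proof.
case/andP=> i1 im.
elim: m im => [|m IH] im; first by lia.
case: (ltnP i m.+1) => [lt|ge]; last first.
  have ei : i = m.+1 by lia.
  rewrite ei big_mkcond big_nat_recr //= eqxx muln1 -big_mkcond /=.
  rewrite subnn fact0 mul1n.
  have -> : \prod_(1 <= i0 < m.+1 | i0 != m.+1) dst (m.+1 ^ 2) (i0 ^ 2) =
            \prod_(1 <= j < (m.+1 - 1).+1) ((m.+1 - j) * (m.+1 + j)).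
    rewrite subn1 /= big_mkcond; apply: eq_big_nat => j /andP[j1 jm] /=.
    rewrite ifT; last by lia.
    rewrite /dst; nia.
  have := Bk (ltnSn m).
  have e0 : (m.+1 - m - 1 = 0)%N by lia.
  rewrite e0 fact0 mul1n subn1 /= factS => H.
  have H' : (m.+1 * \prod_(1 <= j < m.+1) ((m.+1 - j) * (m.+1 + j)) = (m.+1 + m)`!)%N.
    apply/eqP; rewrite -(eqn_pmul2l (fact_gt0 m)); apply/eqP; rewrite -H; lia.
  have e : (m.+1 + m.+1 = (m.+1 + m).+1)%N by lia.
  rewrite e factS -H'; lia.
have im' : (i <= m)%N by lia.
rewrite big_mkcond big_nat_recr //= -big_mkcond /=.
rewrite ifT; last by lia.
have e1 : (m.+1 - i = (m - i).+1)%N by lia.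
have e2 : (m.+1 + i = (m + i).+1)%N by lia.
rewrite e1 e2 !factS.
have e3 : (dst (i ^ 2) (m.+1 ^ 2) = (m - i).+1 * (m + i).+1)%N by rewrite /dst; nia.
rewrite e3 mulnA (IH im'); lia.
Qed.

Lemma sqrt_ex s : exists m, (4 * m ^ 2 <= s < 4 * m.+1 ^ 2)%N.
Proof.
elim: s => [|s [m /andP[h1 h2]]]; first by exists 0%N.
case: (ltnP s.+1 (4 * m.+1 ^ 2)) => h3.
  by exists m; rewrite h3 andbT; lia.
by exists m.+1; apply/andP; split; nia.
Qed.

Definition Tn m : seq nat := 0%N :: 1%N :: [seq (4 * j^2)%N | j <- index_iota 1 m.+1].
Definition Qn m t : nat := (\prod_(u <- Tn m | u != t) dst t u)%N.

Lemma sq_inj : injective (fun j : nat => 4 * j ^ 2)%N.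
Proof. move=> a b /eqP; rewrite eqn_mul2l /= eqn_exp2r // => /eqP. done. Qed.

Lemma uniq_Tn m : uniq (Tn m).
Proof.
rewrite /Tn /= (map_inj_uniq sq_inj) iota_uniq andbT.
apply/andP; split.
  rewrite inE negb_or /=; apply/mapP => -[j]; rewrite mem_index_iota => /andP[j1 _] e; lia.
apply/mapP => -[j]; rewrite mem_index_iota => /andP[j1 _] e; lia.
Qed.

Lemma Qn0 m : Qn m 0 = (\prod_(1 <= j < m.+1) (4 * j^2))%N.
Proof.
rewrite /Qn /= !big_cons /= big_map /dst /= mul1n /index_iota big_seq_cond [RHS]big_seq_cond.
apply: eq_big => j; rewrite mem_iota.
  case: (boolP (1 <= j)%N) => //= j1.
  by rewrite andbT; case: (j < _)%N => //=; apply/eqP; lia.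
move=> _; lia.
Qed.

Lemma Qn1 m : Qn m 1 = (\prod_(1 <= j < m.+1) (4 * j^2 - 1))%N.
Proof.
rewrite /Qn /= !big_cons /= big_map /dst /= mul1n /index_iota big_seq_cond [RHS]big_seq_cond.
apply: eq_big => j; rewrite mem_iota.
  case: (boolP (1 <= j)%N) => //= j1.
  by rewrite andbT; case: (j < _)%N => //=; apply/eqP; lia.
move=> /andP[/andP[j1 _] _]; lia.
Qed.

Lemma Qna m i : (1 <= i <= m)%N ->
  Qn m (4 * i^2) = (4 * i^2 * (4 * i^2 - 1) * \prod_(1 <= j < m.+1 | j != i) (4 * dst (i^2) (j^2)))%N.
Proof.
move=> /andP[i1 im].
rewrite /Qn /= !big_cons /=.
have -> : (0 != 4 * i^2)%N by apply/eqP; lia.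
have -> : (1 != 4 * i^2)%N by apply/eqP; lia.
rewrite big_map.
have -> : dst (4 * i ^ 2) 0 = (4 * i^2)%N by rewrite /dst; lia.
have -> : dst (4 * i ^ 2) 1 = (4 * i^2 - 1)%N by rewrite /dst; lia.
rewrite mulnA; congr (_ * _)%N.
apply: eq_big => j.
  by rewrite (inj_eq sq_inj).
move=> _; rewrite /dst; nia.
Qed.

Lemma W1n m : (m.+1 * Qn m 0 <= (2 * m).+1 * Qn m 1)%N.
Proof. by rewrite Qn0 Qn1 N1. Qed.

Lemma Wan m i : (1 <= i <= m)%N -> ((4 * i^2 - 1) * Qn m 0 <= 2 * Qn m (4 * i^2))%N.
Proof.
move=> him; have /andP[i1 im] := him.
have iin : i \in index_iota 1 m.+1 by rewrite mem_index_iota; lia.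
rewrite Qna // Qn0 (bigD1_seq i) ?iota_uniq //=.
rewrite !big_split /=.
set C := (\prod_(1 <= i0 < m.+1 | i0 != i) 4)%N.
set A := (\prod_(1 <= i0 < m.+1 | i0 != i) i0)%N.
set B := (\prod_(1 <= i0 < m.+1 | i0 != i) dst (i ^ 2) (i0 ^ 2))%N.
suff : (A * A <= 2 * B)%N.
  move=> h; have : (C * (A * A) <= C * (2 * B))%N by rewrite leq_mul2l h orbT.
  move=> h2; have := leq_mul (leqnn ((4*i^2-1)*(4*i^2))) h2; lia.
have hA : (i * A = m`!)%N.
  by rewrite fact_prod /A -(bigD1_seq i (F := fun j => j)) ?iota_uniq.
have hB := N2 him; rewrite -/B in hB.
have h3 := N3 im.
have : (i^2 * (A * A) <= i^2 * (2 * B))%N.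
  have -> : (i^2 * (A * A) = (i * A) * (i * A))%N by lia.
  rewrite hA; lia.
rewrite leq_mul2l => /orP[|//]; lia.
Qed.

Lemma bin_id s j k : (j <= k)%N -> ('C(s - j, k - j) * 'C(s, j) = 'C(s, k) * 'C(k, j))%N.
Proof.
move=> jk; case: (leqP k s) => ks; last first.
  case: (ltnP s j) => sj; first by rewrite (bin_small sj) (bin_small ks) !muln0 !mul0n.
  have h : (s - j < k - j)%N by lia.
  by rewrite (bin_small ks) (bin_small h) !mul0n.
have js : (j <= s)%N by lia.
apply/eqP; rewrite -(eqn_pmul2r (_ : 0 < j`! * (k - j)`! * (s - k)`!)%N); last first.
  by rewrite !muln_gt0 !fact_gt0.
apply/eqP.
have h1 := bin_fact js. have h2 := bin_fact jk. have h3 := bin_fact ks.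
have h4 := @bin_fact (s - j) (k - j) (leq_sub2r j ks).
have e : (s - j - (k - j) = s - k)%N by lia.
rewrite e in h4.
transitivity ('C(s, j) * (j`! * (('C(s - j, k - j) * ((k - j)`! * (s - k)`!)))))%N; first by lia.
rewrite h4 h1.
transitivity ('C(s, k) * (('C(k, j) * (j`! * (k - j)`!)) * (s - k)`!))%N; last by lia.
by rewrite h2 h3.
Qed.

Section Count.
Variables (n : nat) (S J : {set 'I_n}).

Definition cnt k := #|[set z : {set 'I_n} | [&& z \subset S, #|z| == k & J \subset z]]|.

Lemma cnt_out k : ~~ (J \subset S) -> cnt k = 0%N.
Proof.
move=> nJS; apply: eq_card0 => z; rewrite inE; apply/negP => /and3P[zS _ Jz].
by move: nJS; rewrite (subset_trans Jz zS).
Qed.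

Lemma cnt_in k : J \subset S -> (cnt k * 'C(#|S|, #|J|) = 'C(#|S|, k) * 'C(k, #|J|))%N.
Proof.
move=> JS.
case: (ltnP k #|J|) => kJ.
  rewrite [X in (_ = _ * X)%N]bin_small // muln0.
  suff -> : cnt k = 0%N by [].
  apply: eq_card0 => z; rewrite inE; apply/negP => /and3P[_ /eqP zk Jz].
  by have := subset_leq_card Jz; rewrite zk leqNgt kJ.
rewrite -bin_id //.
congr (_ * _)%N.
have <- : #|S :\: J| = (#|S| - #|J|)%N by rewrite cardsDS.
rewrite -cards_draws /cnt.
rewrite -(@card_in_imset _ _ (fun z => z :\: J)).
  apply: eq_card => w; apply/imsetP/idP.
    case=> z; rewrite inE => /and3P[zS /eqP zk Jz] ->.
    by rewrite inE setSD //= cardsDS // zk eqxx.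
  rewrite inE => /andP[wSJ /eqP wk]; exists (w :|: J).
    rewrite inE subUset JS andbT.
    move: wSJ; rewrite subsetD => /andP[wS dwJ]; rewrite wS subsetUr andbT /=.
    rewrite cardsU (disjoint_setI0 dwJ) cards0 subn0 wk; apply/eqP; lia.
  move: wSJ; rewrite subsetD => /andP[_ dwJ].
  rewrite setDUl setDv setU0; apply/setP => i; rewrite inE.
  case: (boolP (i \in w)) => iw /=; last by rewrite andbF.
  by rewrite (disjointFr dwJ iw).
move=> z1 z2; rewrite !inE => /and3P[_ _ J1] /and3P[_ _ J2] e.
by rewrite -(setID z1 J) -(setID z2 J) (setIidPr J1) (setIidPr J2) e.
Qed.
End Count.

Local Open Scope ring_scope.

Section Interp.
Variable F : fieldType.

Definition wgt (r : seq F) (t : F) := (\prod_(u <- r | u != t) (t - u))^-1.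

Lemma interp_sum (r : seq F) (P : {poly F}) :
  uniq r -> (size P < size r)%N -> \sum_(t <- r) P.[t] * wgt r t = 0.
Proof.
move=> ur sP.
pose Q := \sum_(t <- r) (P.[t] * wgt r t) *: \prod_(u <- r | u != t) ('X - u%:P).
have Qev : forall t0, t0 \in r -> Q.[t0] = P.[t0].
  move=> t0 t0r; rewrite /Q horner_sum (bigD1_seq t0) //=.
  rewrite [X in _ + X]big1 ?addr0; last first.
    move=> t tt0; rewrite hornerZ horner_prod.
    apply/eqP; rewrite mulf_eq0; apply/orP; right.
    rewrite prodf_seq_eq0; apply/hasP; exists t0 => //.
    by rewrite eq_sym tt0 hornerXsubC subrr eqxx.
  rewrite hornerZ horner_prod.
  under eq_bigr => u _ do rewrite hornerXsubC.
  rewrite /wgt -mulrA mulVf ?mulr1 //.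
  rewrite prodf_seq_eq0; apply/hasPn => u _; apply/negP => /andP[un].
  by rewrite subr_eq0 eq_sym (negPf un).
have szt : forall t, t \in r -> size (\prod_(u <- r | u != t) ('X - u%:P)) = size r.
  move=> t tr; rewrite -big_filter size_prod_XsubC size_filter.
  have := count_predC (pred1 t) r; rewrite count_uniq_mem // tr.
  by move=> <-; rewrite add1n.
have sQ : (size Q <= size r)%N.
  apply: (leq_trans (size_sum _ _ _)); apply/bigmax_leqP_seq => t tr _.
  by apply: (leq_trans (size_scale_leq _ _)); rewrite szt.
have QP : Q = P.
  apply/eqP; rewrite -subr_eq0; apply/negPn/negP => nz.
  have := max_poly_roots nz _ ur.
  have -> : all (root (Q - P)) r.
    by apply/allP => t tr; rewrite /root hornerD hornerN Qev // subrr.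
  move=> /(_ isT); rewrite ltnNge => /negP; apply.
  apply: (leq_trans (size_add _ _)); rewrite geq_max sQ size_polyN.
  exact: ltnW.
have : Q`_(size r).-1 = P`_(size r).-1 by rewrite QP.
rewrite [P`_ _]nth_default; last by rewrite -ltnS (ltn_predK sP).
move=> H; rewrite -[RHS]H /Q coef_sum; apply: eq_big_seq => t tr.
rewrite coefZ.
have := monic_prod_XsubC r (fun u => u != t) id.
rewrite monicE /lead_coef szt // => /eqP ->.
by rewrite mulr1.
Qed.
End Interp.

Section Real.
Variable R : realFieldType.

Lemma inv_le (a b x y : R) : 0 < a -> 0 < b -> 0 < x -> x * a <= y * b -> b^-1 <= y / x * a^-1.
Proof.
move=> a0 b0 x0 h.
have -> : y / x * a^-1 = (y * b) / (x * a) * b^-1.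
  by field; rewrite !gt_eqF.
rewrite -[X in X <= _]mul1r; apply: ler_wpM2r; first by rewrite invr_ge0 ltW.
by rewrite ler_pdivlMr ?mul1r // mulr_gt0.
Qed.

Lemma norm_nat_dist (t u : nat) : `|(t%:R : R) - u%:R| = (dst t u)%:R.
Proof.
rewrite /dst; case: (leqP t u) => h.
  have -> : (t - u = 0)%N by lia.
  by rewrite add0n distrC natrB // ger0_norm // subr_ge0 ler_nat.
have -> : (u - t = 0)%N by lia.
by rewrite addn0 natrB ?ger0_norm ?subr_ge0 ?ler_nat //; apply: ltnW.
Qed.

Definition rr m : seq R := [seq (t%:R : R) | t <- Tn m].

Lemma uniq_rr m : uniq (rr m).
Proof.
rewrite map_inj_uniq ?uniq_Tn // => a b /eqP; rewrite eqr_nat => /eqP. done.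
Qed.

Lemma Qn_gt0 m t : (0 < Qn m t)%N.
Proof. by apply: prodn_cond_gt0 => u ut; rewrite /dst; lia. Qed.

Lemma norm_wgt m t : `|wgt (rr m) t%:R| = ((Qn m t)%:R)^-1.
Proof.
rewrite /wgt normfV /rr big_map normr_prod natr_prod /Qn.
apply: congr1; apply: eq_big => u; first by rewrite eqr_nat.
by move=> _; rewrite norm_nat_dist.
Qed.

Lemma sum_tel m : \sum_(1 <= j < m.+1) 2 / ((4 * j^2 - 1)%N%:R : R) = (2 * m)%:R / ((2 * m).+1)%:R.
Proof.
elim: m => [|m IH]; first by rewrite big_geq // muln0 mul0r.
rewrite big_nat_recr // IH.
have e : (4 * m.+1 ^ 2 - 1 = (2 * m + 1) * (2 * m + 3))%N by nia.
have e2 : (2 * m.+1 = (2 * m) + 2)%N by lia.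
have e3 : ((2 * m + 2).+1 = (2 * m) + 3)%N by lia.
have e4 : ((2 * m).+1 = (2 * m) + 1)%N by lia.
rewrite e e2 e3 e4 !natrM !natrD ?natrM /= !addr0.
have q0 : 0 <= (m%:R : R) by rewrite ler0n.
have q1 : (m%:R + m%:R + 1 : R) != 0 by rewrite gt_eqF //; lra.
have q3 : (m%:R + m%:R + 3 : R) != 0 by rewrite gt_eqF //; lra.
by field; rewrite q1 q3.
Qed.


Lemma sum_rr m (F : R -> R) : \sum_(t <- rr m) F t =
  F 0 + (F 1 + \sum_(j <- index_iota 1 m.+1) F ((4 * j^2)%N%:R)).
Proof. by rewrite /rr /Tn big_map !big_cons big_map. Qed.

Lemma size_rr m : size (rr m) = m.+2.
Proof. by rewrite size_map /Tn /= size_map size_iota subn1. Qed.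

Lemma univ m s (P : {poly R}) : (1 <= s)%N -> (4 * m^2 <= s)%N ->
  1 <= `|P.[0]| -> (forall k, (1 <= k <= s)%N -> `|P.[k%:R]| <= 3^-1) ->
  (m.+2 <= size P)%N.
Proof.
move=> s1 ms P0 Pk.
rewrite leqNgt; apply/negP => sP.
have := interp_sum (uniq_rr m) (_ : (size P < size (rr m))%N); rewrite size_rr in sP *; move=> /(_ sP).
rewrite sum_rr.
set w := wgt (rr m).
move=> /eqP; rewrite addr_eq0 => /eqP H.
have Q0p : (0 : R) < (Qn m 0)%:R by rewrite ltr0n Qn_gt0.
have w0 : `|w 0| = ((Qn m 0)%:R)^-1 by rewrite -(norm_wgt m 0).
have w1 : `|w 1| <= ((2 * m).+1)%:R / (m.+1)%:R * ((Qn m 0)%:R)^-1.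
  have -> : `|w 1| = ((Qn m 1)%:R)^-1 by rewrite -(norm_wgt m 1).
  apply: inv_le => //; first by rewrite ltr0n Qn_gt0.
  by rewrite -!natrM ler_nat W1n.
have wa : forall j, j \in index_iota 1 m.+1 ->
    `|w ((4 * j^2)%N%:R)| <= 2 / ((4 * j^2 - 1)%N%:R) * ((Qn m 0)%:R)^-1.
  move=> j; rewrite mem_index_iota => jm.
  rewrite norm_wgt; apply: inv_le => //; first by rewrite ltr0n Qn_gt0.
    by rewrite ltr0n; lia.
  by rewrite -!natrM ler_nat Wan.
have : `|P.[0]| * `|w 0| <= 3^-1 * (((2 * m).+1)%:R / (m.+1)%:R * ((Qn m 0)%:R)^-1
      + \sum_(j <- index_iota 1 m.+1) 2 / ((4 * j^2 - 1)%N%:R) * ((Qn m 0)%:R)^-1).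
  rewrite -normrM H normrN.
  apply: (le_trans (ler_normD _ _)).
  rewrite mulrDr; apply: lerD.
    rewrite normrM; apply: ler_pM => //; first exact: (Pk 1%N s1).
  apply: (le_trans (ler_norm_sum _ _ _)).
  rewrite mulr_sumr big_seq [X in _ <= X]big_seq; apply: ler_sum => j jm.
  rewrite normrM; apply: ler_pM => //; last exact: wa.
  apply: Pk; move: jm; rewrite mem_index_iota => jm.
  apply/andP; split; first by nia.
  by apply: leq_trans ms; nia.
rewrite -big_distrl /= sum_tel w0 -mulrDl mulrA => h.
have K : 3^-1 * (((2 * m).+1)%:R / (m.+1)%:R + (2 * m)%:R / ((2 * m).+1)%:R) < (1 : R).
  have a1 : ((2 * m).+1)%:R / (m.+1)%:R < (2 : R).
    by rewrite ltr_pdivrMr ?ltr0n // -natrM ltr_nat; lia.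
  have a2 : (2 * m)%:R / ((2 * m).+1)%:R < (1 : R).
    by rewrite ltr_pdivrMr ?ltr0n // mul1r ltr_nat.
  rewrite mulrC -[X in _ < X](@mulfV _ 3) ?pnatr_eq0 // ltr_pM2r ?invr_gt0 ?ltr0n //.
  by rewrite -[3%:R]/((2 + 1)%N%:R) natrD; apply: ltrD.
have : `|P.[0]| * ((Qn m 0)%:R)^-1 < ((Qn m 0)%:R)^-1.
  apply: (le_lt_trans h).
  by rewrite -[X in _ < X]mul1r ltr_pM2r // invr_gt0.
rewrite -[X in _ < X]mul1r ltr_pM2r ?invr_gt0 //.
by rewrite ltNge P0.
Qed.

End Real.

Section Binp.
Variable R : numFieldType.

Definition binp (j : nat) : {poly R} := (j`!%:R)^-1 *: \prod_(i < j) ('X - (i%:R)%:P).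

Lemma binp_size j : (size (binp j) <= j.+1)%N.
Proof.
apply: (leq_trans (size_scale_leq _ _)).
by rewrite size_prod_XsubC /index_enum unlock -enumT size_enum_ord.
Qed.

Lemma binp_eval j k : (binp j).[k%:R] = ('C(k, j))%:R.
Proof.
rewrite /binp hornerZ horner_prod.
under eq_bigr => i _ do rewrite hornerXsubC.
have -> : \prod_(i < j) (k%:R - i%:R) = (k ^_ j)%:R :> R.
  case: (ltnP k j) => kj.
    rewrite ffact_small //; apply/eqP; rewrite prodf_seq_eq0; apply/hasP.
    exists (Ordinal kj); first by rewrite mem_index_enum.
    by rewrite /= subrr eqxx.
  rewrite ffact_prod natr_prod; apply: eq_bigr => i _.
  rewrite natrB //; apply: leq_trans (ltnW (ltn_ord i)) kj.
rewrite -bin_ffact natrM mulrC mulfK // pnatr_eq0 -lt0n fact_gt0 //.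
Qed.
End Binp.

Section Sym.
Variable R : realFieldType.
Variables (n : nat) (x : {ffun 'I_n -> bool}) (S : {set 'I_n}).

Definition yz (z : {set 'I_n}) : {ffun 'I_n -> bool} := [ffun i => x i (+) (i \in z)].
Definition Lev k (F : {set 'I_n} -> R) := \sum_(z : {set 'I_n} | (z \subset S) && (#|z| == k)) F z.

Definition alp (mm : 'X_{1..n}) i : R := ((x i)%:R) ^+ mm i.
Definition bet (mm : 'X_{1..n}) i : R := ((~~ x i)%:R) ^+ mm i - alp mm i.
Definition wJ (mm : 'X_{1..n}) (J : {set 'I_n}) : R := \prod_i (if i \in J then bet mm i else alp mm i).
Definition cJ (mm : 'X_{1..n}) (J : {set 'I_n}) : R :=
  if (J \subset S) && (J \subset [set i | mm i != 0%N]) then wJ mm J / ('C(#|S|, #|J|))%:R else 0.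
Definition monoP (mm : 'X_{1..n}) : {poly R} := \sum_(J : {set 'I_n}) cJ mm J *: binp R #|J|.

Lemma card_supp (mm : 'X_{1..n}) (J : {set 'I_n}) : J \subset [set i | mm i != 0%N] -> (#|J| <= mdeg mm)%N.
Proof.
move=> /subsetP JS; rewrite mdegE -sum1_card.
apply: (@leq_trans (\sum_(i in J) mm i)).
  by apply: leq_sum => i /JS; rewrite inE lt0n.
rewrite [X in (_ <= X)%N](bigID (mem J)) /=; exact: leq_addr.
Qed.

Lemma monoP_size (mm : 'X_{1..n}) : (size (monoP mm) <= (mdeg mm).+1)%N.
Proof.
apply: (leq_trans (size_sum _ _ _)); apply/bigmax_leqP => J _.
rewrite /cJ; case: ifP => [/andP[_ Js]|_]; last by rewrite scale0r size_poly0.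
apply: (leq_trans (size_scale_leq _ _)); apply: (leq_trans (binp_size _ _)).
by rewrite ltnS card_supp.
Qed.

Lemma mono_expand (mm : 'X_{1..n}) z :
  \prod_i ((yz z i)%:R : R) ^+ mm i = \sum_(J : {set 'I_n}) (J \subset z)%:R * wJ mm J.
Proof.
have -> : \prod_i ((yz z i)%:R : R) ^+ mm i = \prod_i ((i \in z)%:R * bet mm i + alp mm i).
  apply: eq_bigr => i _; rewrite /yz ffunE /bet /alp.
  by case: (i \in z); rewrite ?addbT ?addbF ?mul1r ?mul0r ?add0r // subrK.
rewrite bigA_distr; apply: eq_bigr => J _.
case: (boolP (J \subset z)) => Jz.
  rewrite mul1r; apply: eq_bigr => i _; case: ifP => // iJ.
  by rewrite (subsetP Jz _ iJ) mul1r.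
rewrite mul0r; case/subsetPn: Jz => i iJ iz.
by rewrite (bigD1 i) //= iJ (negPf iz) !mul0r.
Qed.

Lemma lev_sub (J : {set 'I_n}) k : Lev k (fun z => (J \subset z)%:R) = (cnt S J k)%:R.
Proof.
rewrite /Lev /cnt -sum1dep_card natr_sum big_mkcond [RHS]big_mkcond /=.
apply: eq_bigr => z _.
by case: (z \subset S); case: (#|z| == k); case: (J \subset z).
Qed.

Lemma wJ0 (mm : 'X_{1..n}) (J : {set 'I_n}) : ~~ (J \subset [set i | mm i != 0%N]) -> wJ mm J = 0.
Proof.
case/subsetPn => i iJ; rewrite inE negbK => /eqP mi.
by rewrite /wJ (bigD1 i) //= iJ /bet /alp mi !expr0 subrr mul0r.
Qed.

Lemma mono_lev (mm : 'X_{1..n}) k : (k <= #|S|)%N ->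
  Lev k (fun z => \prod_i ((yz z i)%:R : R) ^+ mm i) = ('C(#|S|, k))%:R * (monoP mm).[k%:R].
Proof.
move=> ks.
rewrite /Lev; under eq_bigr => z _ do rewrite mono_expand.
rewrite exchange_big /= /monoP horner_sum mulr_sumr; apply: eq_bigr => J _.
rewrite -big_distrl /= -/(Lev k (fun z => (J \subset z)%:R)) (lev_sub J k) hornerZ binp_eval.
rewrite /cJ; case: (boolP (J \subset S)) => JS /=; last first.
  by rewrite cnt_out // mul0r mul0r mulr0.
case: (boolP (J \subset _)) => Jsupp; last by rewrite wJ0 // mulr0 mul0r mulr0.
have hc := cnt_in k JS.
have c0 : ('C(#|S|, #|J|))%:R != 0 :> R.
  by rewrite pnatr_eq0 -lt0n bin_gt0 subset_leq_card.
have -> : (cnt S J k)%:R = ('C(#|S|, k))%:R * ('C(k, #|J|))%:R / ('C(#|S|, #|J|))%:R :> R.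
  by rewrite -natrM -hc natrM mulfK.
by field.
Qed.

Definition polyP (p : {mpoly R[n]}) : {poly R} := \sum_(m <- msupp p) p@_m *: monoP m.

Lemma polyP_size p : (size (polyP p) <= msize p)%N.
Proof.
apply: (leq_trans (size_sum _ _ _)); apply/bigmax_leqP_seq => m mp _.
apply: (leq_trans (size_scale_leq _ _)); apply: (leq_trans (monoP_size _)).
exact: msize_mdeg_lt.
Qed.

Lemma poly_lev (p : {mpoly R[n]}) k : (k <= #|S|)%N ->
  Lev k (fun z => p.@[fun i => ((yz z i)%:R : R)]) = ('C(#|S|, k))%:R * (polyP p).[k%:R].
Proof.
move=> ks; rewrite /Lev; under eq_bigr => z _ do rewrite mevalE.
rewrite exchange_big /= /polyP horner_sum mulr_sumr; apply: eq_bigr => m _.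
rewrite -mulr_sumr hornerZ mulrCA -(mono_lev m ks) /Lev. done.
Qed.
End Sym.

Section Mono.
Variable n : nat.

Lemma key (f : cube n -> bool) (inc : forall u v, cube_le u v -> (f u <= f v)%N)
  (x : cube n) (z : {set 'I_n}) :
  z \subset [set i | f x != f (flip x i)] -> z != set0 -> f (yz x z) = ~~ f x.
Proof.
move=> /subsetP zS /set0Pn [i iz].
have dir : forall j, j \in z -> x j = f x.
  move=> j /zS; rewrite inE => fj.
  case hx: (x j); case hf: (f x) => //.
    have : cube_le (flip x j) x.
      by apply/forallP => k; rewrite /flip ffunE; case: eqP => [->|_]; rewrite ?hx ?implybb.
    move=> /(inc _ _); rewrite hf; move: fj; rewrite hf; case: (f (flip x j)) => //.
  have : cube_le x (flip x j).
    by apply/forallP => k; rewrite /flip ffunE; case: eqP => [->|_]; rewrite ?hx ?implybb.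
  move=> /(inc _ _); rewrite hf; move: fj; rewrite hf; case: (f (flip x j)) => //.
have fi : f (flip x i) = ~~ f x.
  by move: (zS i iz); rewrite inE; case: (f x); case: (f (flip x i)).
case hf: (f x) => /=.
  have : cube_le (yz x z) (flip x i).
    apply/forallP => k; rewrite /flip /yz !ffunE; case: eqP => [->|ki].
      by rewrite iz dir // hf.
    case: (boolP (k \in z)) => kz; last by rewrite addbF implybb.
    by rewrite dir // hf.
  move=> /(inc _ _); rewrite fi hf; case: (f (yz x z)) => //.
have : cube_le (flip x i) (yz x z).
  apply/forallP => k; rewrite /flip /yz !ffunE; case: eqP => [->|ki].
    by rewrite iz dir // hf.
  case: (boolP (k \in z)) => kz; last by rewrite addbF implybb.
  by rewrite dir // hf.
move=> /(inc _ _); rewrite fi hf; case: (f (yz x z)) => //.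
Qed.

Lemma key_mon (f : cube n -> bool) : monotone f -> forall (x : cube n) (z : {set 'I_n}),
  z \subset [set i | f x != f (flip x i)] -> z != set0 -> f (yz x z) = ~~ f x.
Proof.
case=> [inc|dec] x z zS zn; first exact: key.
have inc' : forall u v, cube_le u v -> (fneg f u <= fneg f v)%N.
  by move=> u v /dec; rewrite /fneg; case: (f u); case: (f v).
have := @key (fneg f) inc' x z.
rewrite /fneg.
have -> : [set i | ~~ f x != ~~ f (flip x i)] = [set i | f x != f (flip x i)].
  by apply/setP => i; rewrite !inE; case: (f x); case: (f (flip x i)).
by move=> /(_ zS zn); case: (f (yz x z)); case: (f x).
Qed.
End Mono.

Unset Implicit Arguments.

Theorem lemma3p7 (R : realType) :
  exists c : R, 0 < c /\
    forall (n : nat) (f : cube n -> bool), monotone f ->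
    forall d0 d1 : nat, is_N R f d0 -> is_N R (fneg f) d1 ->
      c * (sens f)%:R <= (maxn (d0 ^ 2) (d1 ^ 2))%:R.
Proof.
exists 4^-1; split; first by rewrite invr_gt0 ltr0n.
move=> n f mon d0 d1 H0 H1.
suff h : (sens f <= 4 * maxn (d0 ^ 2) (d1 ^ 2))%N.
  by rewrite mulrC ler_pdivrMr ?ltr0n // -natrM ler_nat mulnC.
have cg0 : (0 < #|cube n|)%N by apply/card_gt0P; exists [ffun=> false].
have [x0 hx0] := bigop.eq_bigmax (fun x : cube n => #|[set i | f x != f (flip x i)]|) cg0.
set S := [set i | f x0 != f (flip x0 i)] in hx0.
have sS : sens f = #|S| by rewrite /sens hx0.
rewrite sS.
case: (posnP #|S|) => [->//|s1].
set g := if f x0 then f else fneg f.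
have y0 : yz x0 set0 = x0 by apply/ffunP => i; rewrite ffunE in_set0 addbF.
have hg : forall z : {set 'I_n}, z \subset S -> g (yz x0 z) = (z == set0).
  move=> z zS; case: (eqVneq z set0) => [->|zn].
    by rewrite y0 /g /fneg; case hf: (f x0) => /=; rewrite hf.
  have := key_mon mon zS zn; rewrite /g /fneg; case hf: (f x0) => /= -> //.
have [p [np dp]] : exists p : {mpoly R[n]}, nrep g p /\ mdegree p = (if f x0 then d0 else d1).
  rewrite /g; case hf: (f x0); [case: H0 | case: H1] => -[p hp] _; by exists p.
set P := polyP x0 S p.
have P0 : 1 <= `|P.[0]|.
  have := @poly_lev R n x0 S p 0%N (leq0n _).
  rewrite bin0 mul1r /Lev.
  rewrite (eq_bigl (fun z => z == set0)); last first.
    move=> z; rewrite cards_eq0; case: (eqVneq z set0) => [->|]; first by rewrite sub0set.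
    by rewrite andbF.
  rewrite big_pred1_eq => <-.
  have := np (yz x0 set0); rewrite (hg _ (sub0set _)) eqxx.
  done.
have Pk : forall k, (0 < k <= #|S|)%N -> `|P.[k%:R]| <= 3^-1.
  move=> k /andP[k1 ks].
  have := @poly_lev R n x0 S p k ks; rewrite /Lev => e.
  have Cp : (0 : R) < ('C(#|S|, k))%:R by rewrite ltr0n bin_gt0.
  rewrite -(ler_pM2l Cp) -normr_nat -normrM -/P -e normr_nat.
  apply: (le_trans (ler_norm_sum _ _ _)).
  apply: (@le_trans _ _ (\sum_(z : {set 'I_n} | (z \subset S) && (#|z| == k)) 3^-1)).
    apply: ler_sum => z /andP[zS /eqP zk].
    have := np (yz x0 z); rewrite (hg _ zS).
    have -> : (z == set0) = false.
      by apply/negP => /eqP z0; move: zk k1; rewrite z0 cards0 => <-.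
    done.
  rewrite sumr_const -cards_draws.
  have -> : #|[pred z : {set 'I_n} | (z \subset S) && (#|z| == k)]| = #|[set A : {set 'I_n} | A \subset S & #|A| == k]|.
    by apply: eq_card => z; rewrite inE.
  by rewrite -[3^-1 *+ _]mulr_natl.
have [m /andP[hm hs]] := sqrt_ex #|S|.
have := univ s1 hm P0 Pk.
have := polyP_size x0 S p; rewrite -/P => h1 h2.
have hd : (m.+1 <= (if f x0 then d0 else d1))%N.
  rewrite -dp /mdegree; move: h1 h2; move: (size P) (mmeasure mdeg p) => a b h1 h2; lia.
have : (m.+1 ^ 2 <= maxn (d0 ^ 2) (d1 ^ 2))%N.
  move: hd; case: (f x0) => hd.
    apply: (leq_trans _ (leq_maxl _ _)); by rewrite leq_exp2r.
  apply: (leq_trans _ (leq_maxr _ _)); by rewrite leq_exp2r.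
lia.
Qed.
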